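(* Let $\vec f=(f_1,\dots,f_n)$ be a profile of acknowledgement-based protocols, let $i\in[n]$, and fix a protocol $f_i'$ for player $i$. For $\tau^*\ge1$ and a history $h_{i,\tau^*}=(a_{i,1},\dots,a_{i,\tau^*})$ consistent with $(\vec f_{-i},f_i')$, let $r_i(h_{i,\tau^*})$ be the protocol that plays $a_{i,t}$ with probability $1$ at each slot $1\le t\le\tau^*$ and follows $f'_{i,t}$ for $t>\tau^*$. If there exists a finite $\tau^*\ge1$ such that $C_i^{(\vec f_{-i},r_i(h_{i,\tau^*}))}(h_0)\ge C_i^{(\vec f_{-i},f_i)}(h_0)$ for every such $h_{i,\tau^*}$, then $C_i^{(\vec f_{-i},f_i')}(h_0)\ge C_i^{(\vec f_{-i},f_i)}(h_0)$.
   Context: Contention game: $n$ players, channels $K=\{1,\dots,k\}$, slots $t=1,2,\dots$; each player has one packet, initially pending; in each slot a pending player chooses (possibly randomly) an action in $\{0,1,\dots,k\}$ ($0$ = idle, $a$ = transmit on channel $a$); a lone transmitter on a channel succeeds and leaves, colliding transmitters remain pending. Acknowledgement-based protocols: decision rules depend only on the player's personal action history; only transmitting players learn whether they succeeded. $T_i$ is player $i$'s latency and $C_i^{\vec g}(h_0)=\mathbb E[T_i\mid \vec g]$ her unconditional expected latency under profile $\vec g$; $(\vec f_{-i},g_i)$ is $\vec f$ with $f_i$ replaced by $g_i$. A history is consistent with a profile if it occurs for player $i$ with positive probability under it. *)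

(* Defs.v *)
From HB Require Import structures.
From mathcomp Require Import all_boot all_order all_algebra.
From mathcomp Require Import all_classical all_reals all_analysis.
Set Implicit Arguments. Unset Strict Implicit. Unset Printing Implicit Defensive.
Import Order.TTheory GRing.Theory Num.Theory.
Local Open Scope ring_scope.

(* Actions: 'I_k.+1, with ord0 = idle and a = transmit on channel a (1..k). *)
Definition action (k : nat) := 'I_k.+1.
(* A joint action profile in one slot (departed players are recorded idle). *)
Definition aprof (n k : nat) := {ffun 'I_n -> 'I_k.+1}.

(* Acknowledgement-based protocol: given the player's personal action history
   (the actions taken in slots 1..t-1; all earlier transmissions of a pending
   player failed, so feedback is implicit), the probability of each action
   at slot t = size h + 1. *)
Definition protocol (R : realType) (k : nat) := seq 'I_k.+1 -> 'I_k.+1 -> R.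

Definition is_protocol (R : realType) (k : nat) (f : protocol R k) : Prop :=
  forall h : seq 'I_k.+1, (forall a, 0 <= f h a) /\ \sum_(a < k.+1) f h a = 1.

Definition upd (R : realType) (n k : nat) (F : 'I_n -> protocol R k) (i : 'I_n)
  (g : protocol R k) : 'I_n -> protocol R k :=
  fun j => if j == i then g else F j.

Definition succeeds (n k : nat) (p : aprof n k) (j : 'I_n) : bool :=
  (p j != ord0) && [forall l : 'I_n, (l != j) ==> (p l != p j)].

Definition pending_after (n k : nat) (tr : seq (aprof n k)) (j : 'I_n) : bool :=
  all (fun p : aprof n k => ~~ succeeds p j) tr.

Definition phist (n k : nat) (tr : seq (aprof n k)) (j : 'I_n) : seq 'I_k.+1 :=
  map (fun p : aprof n k => p j) tr.

Definition slot_weight (R : realType) (n k : nat) (F : 'I_n -> protocol R k)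
  (tr : seq (aprof n k)) (p : aprof n k) : R :=
  \prod_(j < n) (if pending_after tr j then F j (phist tr j) (p j)
                 else ((p j == ord0) : bool)%:R).

Definition aprof0 (n k : nat) : aprof n k := [ffun => ord0].

Definition traj_weight (R : realType) (n k : nat) (F : 'I_n -> protocol R k)
  (tr : seq (aprof n k)) : R :=
  \prod_(s < size tr) slot_weight F (take s tr) (nth (aprof0 n k) tr s).

Definition prob_pending (R : realType) (n k : nat) (F : 'I_n -> protocol R k)
  (i : 'I_n) (t : nat) : R :=
  \sum_(tr : t.-tuple (aprof n k) | pending_after tr i) traj_weight F tr.

(* C_i^F(h_0) = E[T_i] = sum_{t>=0} P(T_i > t), in the extended reals *)
Definition latency (R : realType) (n k : nat) (F : 'I_n -> protocol R k)
  (i : 'I_n) : \bar R :=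
  (\sum_(t <oo) (prob_pending F i t)%:E)%E.

Definition replay (R : realType) (k : nat) (f' : protocol R k)
  (h : seq 'I_k.+1) : protocol R k :=
  fun g a => if (size g < size h)%N then ((a == nth ord0 h (size g)) : bool)%:R
             else f' g a.

Definition consistent (R : realType) (n k : nat) (F : 'I_n -> protocol R k)
  (i : 'I_n) (tau : nat) (h : tau.-tuple 'I_k.+1) : Prop :=
  0 < \sum_(tr : tau.-tuple (aprof n k) |
            [forall s : 'I_tau, pending_after (take s tr) i ==>
                                 (tnth tr s i == tnth h s)])
        traj_weight F tr.

(* Main.v *)
Require Import Defs.
From HB Require Import structures.
From mathcomp Require Import all_boot all_order all_algebra.
From mathcomp Require Import all_classical all_reals all_analysis.
Import Order.TTheory GRing.Theory Num.Theory.
Local Open Scope ring_scope.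
Set Implicit Arguments. Unset Strict Implicit. Unset Printing Implicit Defensive.

Lemma sum_tuple_cons (T : finType) (V : nmodType) (L : nat) (G : seq T -> V) :
  \sum_(h : L.+1.-tuple T) G h = \sum_(a : T) \sum_(h : L.-tuple T) G (a :: h).
Proof.
rewrite pair_bigA /=.
rewrite (reindex (fun p : T * L.-tuple T => [tuple of p.1 :: p.2])) //=.
exists (fun t : L.+1.-tuple T => (thead t, [tuple of behead t])).
  by move=> [a h] _ /=; congr pair; apply: val_inj.
by move=> t _; rewrite [RHS]tuple_eta; apply: val_inj.
Qed.

Lemma sum_tuple0 (T : finType) (V : nmodType) (G : seq T -> V) :
  \sum_(h : 0.-tuple T) G h = G [::].
Proof. rewrite (big_pred1 [tuple]) // => t; rewrite [t]tuple0 /=; symmetry; exact: eqxx. Qed.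

Lemma sum_tuple_rcons (T : finType) (V : nmodType) (L : nat) (G : seq T -> V) :
  \sum_(h : L.+1.-tuple T) G h = \sum_(h : L.-tuple T) \sum_(a : T) G (rcons h a).
Proof.
elim: L G => [|L IH] G.
  rewrite sum_tuple_cons (sum_tuple0 (fun h => \sum_(a : T) G (rcons h a))) /=.
  by apply: eq_bigr => a _; rewrite (sum_tuple0 (fun h => G (a :: h))).
rewrite sum_tuple_cons.
under eq_bigr => a _ do rewrite (IH (fun h => G (a :: h))).
by rewrite -(@sum_tuple_cons _ _ L (fun h => \sum_(a : T) G (rcons h a))).
Qed.

Definition qw (R : realType) (k : nat) (f : protocol R k) (h : seq 'I_k.+1) : R :=
  \prod_(s < size h) f (take s h) (nth ord0 h s).

Lemma ind_sum (R : realType) (k : nat) (c : 'I_k.+1) :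
  \sum_(a < k.+1) ((a == c) : bool)%:R = 1 :> R.
Proof. by rewrite (bigD1 c) //= eqxx big1 ?addr0 // => a /negbTE ->. Qed.

Lemma ind_sum_w (R : realType) (k : nat) (w : 'I_k.+1 -> R) (c : 'I_k.+1) :
  \sum_(a < k.+1) w a * ((c == a) : bool)%:R = w c.
Proof.
rewrite (bigD1 c) //= eqxx mulr1 big1 ?addr0 // => a Ha.
by rewrite eq_sym (negbTE Ha) mulr0.
Qed.

Lemma replay_prot (R : realType) (k : nat) (f : protocol R k) h :
  is_protocol f -> is_protocol (replay f h).
Proof.
move=> Hf g; rewrite /replay; case: (boolP (size g < size h)%N) => H; last exact: Hf.
by split; [move=> a; exact: ler0n | exact: ind_sum].
Qed.

Lemma upd_prot (R : realType) (n k : nat) (F : 'I_n -> protocol R k) i G :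
  (forall j, is_protocol (F j)) -> is_protocol G -> forall j, is_protocol (upd F i G j).
Proof. by move=> HF HG j; rewrite /upd; case: eqP. Qed.

Lemma slot_ge0 (R : realType) (n k : nat) (F : 'I_n -> protocol R k) tr p :
  (forall j, is_protocol (F j)) -> 0 <= slot_weight F tr p.
Proof.
move=> HF; apply: prodr_ge0 => j _; case: ifP => _; [exact: (HF j _).1 | exact: ler0n].
Qed.

Lemma tw_ge0 (R : realType) (n k : nat) (F : 'I_n -> protocol R k) tr :
  (forall j, is_protocol (F j)) -> 0 <= traj_weight F tr.
Proof. by move=> HF; apply: prodr_ge0 => s _; apply: slot_ge0. Qed.

Lemma slot_sum (R : realType) (n k : nat) (F : 'I_n -> protocol R k) tr :
  (forall j, is_protocol (F j)) -> \sum_(p : aprof n k) slot_weight F tr p = 1.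
Proof.
move=> HF; rewrite /slot_weight.
transitivity (\prod_(j < n) \sum_(a < k.+1) (fun (j : 'I_n) (a : 'I_k.+1) =>
   if pending_after tr j then F j (phist tr j) a else ((a == ord0) : bool)%:R) j a).
  by rewrite bigA_distr_bigA.
apply: big1 => j _ /=; case: (pending_after tr j); [exact: (HF j _).2 | exact: ind_sum].
Qed.

Lemma tw_rcons (R : realType) (n k : nat) (F : 'I_n -> protocol R k) tr p :
  traj_weight F (rcons tr p) = traj_weight F tr * slot_weight F tr p.
Proof.
rewrite /traj_weight size_rcons big_ord_recr /=; congr (_ * _).
  apply: eq_bigr => s _; rewrite -cats1 takel_cat ?nth_cat ?ltn_ord //.
  exact: ltnW.
by rewrite -cats1 takel_cat // take_size nth_cat ltnn subnn.
Qed.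

Lemma tw_sum (R : realType) (n k : nat) (F : 'I_n -> protocol R k) t :
  (forall j, is_protocol (F j)) ->
  \sum_(tr : t.-tuple (aprof n k)) traj_weight F tr = 1.
Proof.
move=> HF; elim: t => [|t IH].
  by rewrite (sum_tuple0 (traj_weight F)) /traj_weight big_ord0.
rewrite (sum_tuple_rcons _ (traj_weight F)).
rewrite -[RHS]IH; apply: eq_bigr => tr _.
under eq_bigr do rewrite tw_rcons.
by rewrite -mulr_sumr slot_sum // mulr1.
Qed.

Lemma qw_rcons (R : realType) (k : nat) (f : protocol R k) h a :
  qw f (rcons h a) = qw f h * f h a.
Proof.
rewrite /qw size_rcons big_ord_recr /=; congr (_ * _).
  apply: eq_bigr => s _; rewrite -cats1 takel_cat ?nth_cat ?ltn_ord //.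
  exact: ltnW.
by rewrite -cats1 takel_cat // take_size nth_cat ltnn subnn.
Qed.

Lemma qw_ge0 (R : realType) (k : nat) (f : protocol R k) h :
  is_protocol f -> 0 <= qw f h.
Proof. by move=> Hf; apply: prodr_ge0 => s _; exact: (Hf _).1. Qed.

Lemma qw_sum (R : realType) (k : nat) (f : protocol R k) L :
  is_protocol f -> \sum_(h : L.-tuple 'I_k.+1) qw f h = 1.
Proof.
move=> Hf; elim: L => [|L IH].
  by rewrite (sum_tuple0 (qw f)) /qw big_ord0.
rewrite (sum_tuple_rcons _ (qw f)) -[RHS]IH; apply: eq_bigr => h _.
under eq_bigr do rewrite qw_rcons.
by rewrite -mulr_sumr (Hf h).2 mulr1.
Qed.

Lemma slot_agree (R : realType) (n k : nat) (F1 F2 : 'I_n -> protocol R k) tr p :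
  (forall j g, size g = size tr -> F1 j g = F2 j g) ->
  slot_weight F1 tr p = slot_weight F2 tr p.
Proof.
move=> H; rewrite /slot_weight; apply: eq_bigr => j _.
by rewrite H // /phist size_map.
Qed.

Lemma slot_split (R : realType) (n k : nat) (F : 'I_n -> protocol R k) i G tr p :
  slot_weight (upd F i G) tr p =
  (\prod_(j < n | j != i) (if pending_after tr j then F j (phist tr j) (p j)
                 else ((p j == ord0) : bool)%:R)) *
  (if pending_after tr i then G (phist tr i) (p i) else ((p i == ord0) : bool)%:R).
Proof.
rewrite /slot_weight (bigD1 i) //= /upd eqxx mulrC; congr (_ * _).
by apply: eq_bigr => j /negbTE ->.
Qed.

Lemma replay_agree (R : realType) (k : nat) (f : protocol R k) h a g :
  size g != size h -> replay f h g = replay f (rcons h a) g.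
Proof.
rewrite /replay size_rcons => Hne.
case: (ltnP (size g) (size h)) => H.
  by rewrite ltnS ltnW // nth_rcons H.
have -> : (size g < (size h).+1)%N = false.
  by rewrite ltnS; apply/negbTE; rewrite -ltnNge ltn_neqAle eq_sym Hne H.
by [].
Qed.

Lemma zero_slot (R : realType) (n k : nat) (F : 'I_n -> protocol R k) i
  (f : protocol R k) h tr s :
  (s < size tr)%N -> (s < size h)%N -> pending_after (take s tr) i ->
  (nth (aprof0 n k) tr s) i != nth ord0 h s ->
  traj_weight (upd F i (replay f h)) tr = 0.
Proof.
move=> Hs Hsh Hp Hne; rewrite /traj_weight (bigD1 (Ordinal Hs)) //= slot_split.
by rewrite Hp /replay /phist size_map size_take Hs Hsh (negbTE Hne) mulr0 mul0r.
Qed.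

Lemma pend_take (n k : nat) (tr : seq (aprof n k)) i s L :
  (s <= L)%N -> pending_after (take L tr) i -> pending_after (take s tr) i.
Proof.
move=> HsL; rewrite /pending_after -(cat_take_drop s (take L tr)) all_cat take_takel //.
by case/andP.
Qed.

Lemma step (R : realType) (n k : nat) (F : 'I_n -> protocol R k) i
  (f : protocol R k) h tr : is_protocol f ->
  traj_weight (upd F i (replay f h)) tr =
  \sum_(a < k.+1) f h a * traj_weight (upd F i (replay f (rcons h a))) tr.
Proof.
move=> Hf.
have Hag : forall a (s : nat), s != size h -> forall j g, size g = s ->
    upd F i (replay f h) j g = upd F i (replay f (rcons h a)) j g.
  move=> a s Hs j g Hg; rewrite /upd; case: (j == i) => //.
  by apply: replay_agree; rewrite Hg.
case: (ltnP (size h) (size tr)) => HL; last first.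
  rewrite -[LHS]mul1r -(Hf h).2 mulr_suml; apply: eq_bigr => a _; congr (_ * _).
  rewrite /traj_weight; apply: eq_bigr => s _; apply: slot_agree => j g Hg.
  apply: (Hag a s); last by rewrite Hg size_take ltn_ord.
  by rewrite neq_ltn (leq_trans (ltn_ord s) HL).
case: (boolP [exists s : 'I_(size h), pending_after (take s tr) i &&
                ((nth (aprof0 n k) tr s) i != nth ord0 h s)]).
  case/existsP => s /andP [Hp Hne].
  have Hs : (s < size tr)%N by exact: ltn_trans (ltn_ord s) HL.
  rewrite (zero_slot F f Hs (ltn_ord s) Hp Hne) big1 // => a _.
  rewrite (@zero_slot _ _ _ F i f (rcons h a) tr s Hs) ?mulr0 //.
    by rewrite size_rcons ltnS ltnW.
  by rewrite nth_rcons ltn_ord.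
move/existsPn => Hall.
have Hsplit : forall GG : 'I_n -> protocol R k, traj_weight GG tr =
   slot_weight GG (take (Ordinal HL) tr) (nth (aprof0 n k) tr (Ordinal HL)) *
   \prod_(s < size tr | s != Ordinal HL) slot_weight GG (take s tr) (nth (aprof0 n k) tr s).
  by move=> GG; rewrite /traj_weight (bigD1 (Ordinal HL)).
under eq_bigr => a _ do rewrite Hsplit.
rewrite Hsplit.
have Hrest : forall a, \prod_(s < size tr | s != Ordinal HL)
    slot_weight (upd F i (replay f (rcons h a))) (take s tr) (nth (aprof0 n k) tr s) =
  \prod_(s < size tr | s != Ordinal HL)
    slot_weight (upd F i (replay f h)) (take s tr) (nth (aprof0 n k) tr s).
  move=> a; apply: eq_bigr => s Hs; apply: slot_agree => j g Hg; symmetry.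
  apply: (Hag a s); last by rewrite Hg size_take ltn_ord.
  by apply: contra Hs => /eqP Hs; apply/eqP/val_inj.
under eq_bigr => a _ do rewrite Hrest slot_split.
rewrite slot_split /=.
set Oth := \prod_(j < n | j != i) _.
set Rest := \prod_(s < size tr | s != Ordinal HL) _.
case Hp: (pending_after (take (size h) tr) i); last first.
  by rewrite -mulr_suml (Hf h).2 mul1r.
have Hph : phist (take (size h) tr) i = h.
  apply: (@eq_from_nth _ ord0); first by rewrite /phist size_map size_take HL.
  move=> s; rewrite /phist size_map size_take HL => Hs.
  rewrite (nth_map (aprof0 n k)) ?size_take ?HL // nth_take //.
  have := Hall (Ordinal Hs); rewrite negb_and negbK /=.
  by rewrite (pend_take (ltnW Hs) Hp) /= => /eqP.
rewrite Hph /replay ltnn.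
under eq_bigr => a _ do rewrite size_rcons ltnSn nth_rcons ltnn eqxx.
transitivity (Oth * (\sum_(a < k.+1) f h a * (((nth (aprof0 n k) tr (size h)) i == a) : bool)%:R) * Rest).
  by rewrite ind_sum_w.
rewrite mulr_sumr mulr_suml; apply: eq_bigr => a _.
by rewrite !mulrA [Oth * f h a]mulrC.
Qed.

Lemma decomp (R : realType) (n k : nat) (F : 'I_n -> protocol R k) i
  (f : protocol R k) L tr : is_protocol f ->
  traj_weight (upd F i f) tr =
  \sum_(h : L.-tuple 'I_k.+1) qw f h * traj_weight (upd F i (replay f h)) tr.
Proof.
move=> Hf; elim: L => [|L IH].
  rewrite (sum_tuple0 (fun h => qw f h * traj_weight (upd F i (replay f h)) tr)).
  rewrite /qw big_ord0 mul1r.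
  have -> : replay f [::] = f.
    by apply: funext => g; apply: funext => a; rewrite /replay ltn0.
  by [].
rewrite (sum_tuple_rcons _ (fun h => qw f h * traj_weight (upd F i (replay f h)) tr)).
rewrite IH; apply: eq_bigr => h _.
rewrite step // mulr_sumr; apply: eq_bigr => a _.
by rewrite qw_rcons mulrA.
Qed.

Lemma consist (R : realType) (n k : nat) (F : 'I_n -> protocol R k) i
  (f : protocol R k) tau (h : tau.-tuple 'I_k.+1) :
  (forall j, is_protocol (F j)) -> is_protocol f -> 0 < qw f h ->
  consistent (upd F i f) i h.
Proof.
move=> HF Hf Hq; rewrite /consistent.
set C := (fun tr : tau.-tuple (aprof n k) => [forall s : 'I_tau,
   pending_after (take s tr) i ==> (tnth tr s i == tnth h s)]).
have HP : forall j, is_protocol (upd F i (replay f h) j).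
  by apply: upd_prot => //; apply: replay_prot.
have HP' : forall j, is_protocol (upd F i f j) by apply: upd_prot.
apply: (lt_le_trans (y := qw f h *
   \sum_(tr : tau.-tuple (aprof n k)) traj_weight (upd F i (replay f h)) tr)).
  by rewrite tw_sum // mulr1.
rewrite (bigID C) /= [X in _ * (_ + X)]big1 ?addr0; last first.
  move=> tr /forallPn [s]; rewrite negb_imply => /andP [Hp Hne].
  rewrite (tnth_nth (aprof0 n k)) (tnth_nth ord0) in Hne.
  by apply: (zero_slot F f _ _ Hp Hne); rewrite size_tuple ltn_ord.
rewrite mulr_sumr; apply: ler_sum => tr _.
rewrite (decomp F i tau tr Hf) (bigD1 h) //= lerDl.
apply: sumr_ge0 => h' _; apply: mulr_ge0; first exact: qw_ge0.
by apply: tw_ge0; apply: upd_prot => //; apply: replay_prot.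
Qed.

Lemma pp_decomp (R : realType) (n k : nat) (F : 'I_n -> protocol R k) i
  (f : protocol R k) tau t : is_protocol f ->
  prob_pending (upd F i f) i t =
  \sum_(h : tau.-tuple 'I_k.+1) qw f h * prob_pending (upd F i (replay f h)) i t.
Proof.
move=> Hf; rewrite /prob_pending.
under eq_bigr => tr _ do rewrite (decomp F i tau tr Hf).
rewrite exchange_big /=; apply: eq_bigr => h _.
by rewrite mulr_sumr.
Qed.

Theorem corollary1 (R : realType) (n k : nat) (F : 'I_n -> protocol R k)
  (i : 'I_n) (f' : protocol R k) :
  (forall j, is_protocol (F j)) -> is_protocol f' ->
  (exists tau : nat, (1 <= tau)%N /\
     forall h : tau.-tuple 'I_k.+1, consistent (upd F i f') i h ->
       (latency F i <= latency (upd F i (replay f' h)) i)%E) ->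
  (latency F i <= latency (upd F i f') i)%E.
Proof.
move=> HF Hf [tau [_ Hyp]].
have Hpp0 : forall (h : tau.-tuple 'I_k.+1) t,
    0 <= prob_pending (upd F i (replay f' h)) i t.
  move=> h t; apply: sumr_ge0 => tr _; apply: tw_ge0.
  by apply: upd_prot => //; apply: replay_prot.
have -> : latency (upd F i f') i =
    (\sum_(h : tau.-tuple 'I_k.+1) (qw f' h)%:E * latency (upd F i (replay f' h)) i)%E.
  rewrite /latency.
  under eq_eseriesr => t _ do rewrite (pp_decomp F i tau t Hf) -sumEFin.
  rewrite nneseries_sum; last first.
    by move=> h t _; rewrite lee_fin; apply: mulr_ge0; [exact: qw_ge0 | exact: Hpp0].
  apply: eq_bigr => h _.
  under eq_eseriesr => t _ do rewrite EFinM.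
  by rewrite nneseriesZl // => t _; rewrite lee_fin.
rewrite -[X in (X <= _)%E]mul1e -(qw_sum tau Hf) -sumEFin ge0_sume_distrl; last first.
  by move=> h _; rewrite lee_fin qw_ge0.
apply: lee_sum => h _.
have := qw_ge0 h Hf; rewrite le_eqVlt => /orP [/eqP <-|Hq].
  by rewrite !mul0e.
apply: lee_wpmul2l; first by rewrite lee_fin ltW.
by apply: Hyp; apply: consist.
Qed.
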